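(* Let $k$ be a field of characteristic $0$. The operad $\mathcal{P}ost\mathcal{L}ie$ is the Koszul dual operad of the operad $\mathcal{C}om\mathcal{T}rias$: $\mathcal{C}om\mathcal{T}rias^!\cong\mathcal{P}ost\mathcal{L}ie$, under the identification of the linear dual of $*$ with $\circ$ and of the linear dual of $\bullet$ with $[\,,\,]$.
   Context: $\mathcal{C}om\mathcal{T}rias$ is the quadratic operad generated by a binary operation $*$ (no symmetry) and a commutative binary operation $\bullet$, with relations $(x*y)*z=x*(y*z)=x*(z*y)$, $(x\bullet y)\bullet z=x\bullet(y\bullet z)$, $x*(y\bullet z)=x*(y*z)$, $(x\bullet y)*z=x\bullet(y*z)$. $\mathcal{P}ost\mathcal{L}ie$ is the quadratic operad generated by a binary operation $\circ$ and an antisymmetric binary operation $[\,,\,]$, with relations: Jacobi for $[\,,\,]$, $(x\circ y)\circ z-x\circ(y\circ z)-(x\circ z)\circ y+x\circ(z\circ y)=x\circ[y,z]$, and $[x,y]\circ z=[x\circ z,y]+[x,y\circ z]$. For a quadratic operad $\mathcal F(V)/(R)$, its Koszul dual is $\mathcal F(V^\vee)/(R^\perp)$, where $V^\vee(n)=V(n)^*\otimes\mathrm{sgn}_n$ and $R^\perp$ is the orthogonal of $R$ under the natural pairing between the two-vertex parts of $\mathcal F(V^\vee)$ and $\mathcal F(V)$. *)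

(* Defs.v *)
(* Binary quadratic operads, arity-3 (two-vertex) part. *)
From HB Require Import structures.
From mathcomp Require Import all_boot all_order fingroup perm all_algebra.
Set Implicit Arguments. Unset Strict Implicit. Unset Printing Implicit Defensive.
Import GRing.Theory.
Local Open Scope ring_scope.

Section QuadOp.
Variable k : fieldType.

(* Binary generators: a space V(2) = 'rV[k]_n together with the action of the
   transposition (12) of S_2, given by v |-> v *m t (so (tau.mu)(x,y) = mu(y,x)). *)

(* Two-vertex part F(V)(3) of the free operad: for each c : 'I_3 (the leaf
   attached to the root vertex) a copy of V(2) (x) V(2), encoded as an n x n
   matrix M with M i j the coefficient of  e_i( e_j(x_(c+1), x_(c+2)), x_c )
   (indices mod 3; i = root vertex, j = inner vertex). *)
Definition F3 (n : nat) := {ffun 'I_3 -> 'M[k]_n}.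

(* The tree monomial  mu( nu(x_a, x_b), x_c )  for a, b, c pairwise distinct. *)
Definition node n (t : 'M[k]_n) (mu nu : 'rV[k]_n) (a b c : 'I_3) : F3 n :=
  [ffun c' : 'I_3 => if c' == c then
     (if val a == ((val c).+1 %% 3)%N then mu^T *m nu else mu^T *m (nu *m t))
   else 0].

(* The tree monomial  mu( x_a, nu(x_b, x_c) ) = (tau.mu)( nu(x_b,x_c), x_a ). *)
Definition nodeR n (t : 'M[k]_n) (mu nu : 'rV[k]_n) (a b c : 'I_3) : F3 n :=
  node t (mu *m t) nu b c a.

(* The S_3-submodule of F(V)(3) generated by relations, each relation being
   given as a function of three (distinct) variable labels x y z. *)
Definition rel_space n (rels : seq ('I_3 -> 'I_3 -> 'I_3 -> F3 n)) : {vspace F3 n} :=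
  <<[seq r (s ord0) (s (inord 1)) (s (inord 2)) | r : 'I_3 -> 'I_3 -> 'I_3 -> F3 n <- rels, s : 'S_3 <- enum [set: 'S_3]]>>%VS.

(* Dual generators V^vee(2) = V(2)^* (x) sgn: coordinates in the dual basis,
   transposition acting by  - t^T. *)
Definition dual_twist n (t : 'M[k]_n) : 'M[k]_n := - t^T.

(* Natural pairing between F(V^vee)(3) and F(V)(3): tree-wise product of the
   pairings of the two vertices (Loday--Vallette, cyclic convention). *)
Definition pairing n (Phi : F3 n) (Psi : F3 n) : k :=
  \sum_(c < 3) \sum_(i < n) \sum_(j < n) Phi c i j * Psi c i j.

Definition in_orth n (R : {vspace F3 n}) (Phi : F3 n) : Prop :=
  forall Psi, Psi \in R -> pairing Phi Psi = 0.

Definition e3 (i : 'I_3) : 'rV[k]_3 := \row_j (if j == i then 1 else 0).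

(* basis of V(2): e_0 = *,  e_1 = *^op (x,y |-> y*x),  e_2 = bullet (commutative) *)
Definition tCT : 'M[k]_3 :=
  \matrix_(i, j) (if ((val i == 0%N) && (val j == 1%N)) || ((val i == 1%N) && (val j == 0%N))
                     || ((val i == 2%N) && (val j == 2%N)) then 1 else 0).
Definition star := e3 ord0.
Definition bullet := e3 (inord 2).

Definition ComTrias_rels : seq ('I_3 -> 'I_3 -> 'I_3 -> F3 3) :=
  [:: (* (x*y)*z = x*(y*z) *)
      (fun x y z => node tCT star star x y z - nodeR tCT star star x y z);
      (* x*(y*z) = x*(z*y) *)
      (fun x y z => nodeR tCT star star x y z - nodeR tCT star star x z y);
      (* (x.y).z = x.(y.z) *)
      (fun x y z => node tCT bullet bullet x y z - nodeR tCT bullet bullet x y z);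
      (* x*(y.z) = x*(y*z) *)
      (fun x y z => nodeR tCT star bullet x y z - nodeR tCT star star x y z);
      (* (x.y)*z = x.(y*z) *)
      (fun x y z => node tCT star bullet x y z - nodeR tCT bullet star x y z)].

Definition ComTrias_R : {vspace F3 3} := rel_space ComTrias_rels.

(* generators in V^vee(2) = ComTrias V(2)^* (x) sgn:
   circ = dual of *,   bracket = dual of bullet *)
Definition tPL : 'M[k]_3 := dual_twist tCT.
Definition circ := e3 ord0.
Definition brk := e3 (inord 2).

Definition PostLie_rels : seq ('I_3 -> 'I_3 -> 'I_3 -> F3 3) :=
  [:: (* Jacobi: [[x,y],z] + [[y,z],x] + [[z,x],y] = 0 *)
      (fun x y z => node tPL brk brk x y z + node tPL brk brk y z x + node tPL brk brk z x y);
      (* (x o y) o z - x o (y o z) - (x o z) o y + x o (z o y) = x o [y,z] *)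
      (fun x y z => node tPL circ circ x y z - nodeR tPL circ circ x y z
                    - node tPL circ circ x z y + nodeR tPL circ circ x z y
                    - nodeR tPL circ brk x y z);
      (* [x,y] o z = [x o z, y] + [x, y o z] *)
      (fun x y z => node tPL circ brk x y z - node tPL brk circ x z y
                    - nodeR tPL brk circ x y z)].

Definition PostLie_R : {vspace F3 3} := rel_space PostLie_rels.

End QuadOp.

(* Main.v *)
Require Import Defs.
From mathcomp Require Import all_boot all_order fingroup perm all_algebra.
Set Implicit Arguments. Unset Strict Implicit. Unset Printing Implicit Defensive.
Import GRing.Theory.
Local Open Scope ring_scope.
Definition tCTI (i j : nat) : int :=
  if ((i == 0%N) && (j == 1%N)) || ((i == 1%N) && (j == 0%N)) || ((i == 2%N) && (j == 2%N)) then 1 else 0.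
Definition tPLI (i j : nat) : int := - tCTI j i.
Definition eI (a j : nat) : int := if j == a then 1 else 0.
Definition sum3 (f : nat -> int) : int := f 0%N + f 1%N + f 2%N.
Definition vmul (mu : nat -> int) (t : nat -> nat -> int) (j : nat) : int :=
  sum3 (fun l => mu l * t l j).
Definition nodeI (t : nat -> nat -> int) (mu nu : nat -> int) (a b c : nat) (c' i j : nat) : int :=
  if c' == c then (if a == ((c.+1) %% 3)%N then mu i * nu j else mu i * vmul nu t j) else 0.
Definition nodeRI (t : nat -> nat -> int) (mu nu : nat -> int) (a b c : nat) :=
  nodeI t (vmul mu t) nu b c a.
Definition F3I := nat -> nat -> nat -> int.
Definition addI (f g : F3I) : F3I := fun c i j => f c i j + g c i j.
Definition subI (f g : F3I) : F3I := fun c i j => f c i j - g c i j.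

Definition CTI (r : nat) (x y z : nat) : F3I :=
  match r with
  | 0 => subI (nodeI tCTI (eI 0) (eI 0) x y z) (nodeRI tCTI (eI 0) (eI 0) x y z)
  | 1 => subI (nodeRI tCTI (eI 0) (eI 0) x y z) (nodeRI tCTI (eI 0) (eI 0) x z y)
  | 2 => subI (nodeI tCTI (eI 2) (eI 2) x y z) (nodeRI tCTI (eI 2) (eI 2) x y z)
  | 3 => subI (nodeRI tCTI (eI 0) (eI 2) x y z) (nodeRI tCTI (eI 0) (eI 0) x y z)
  | _ => subI (nodeI tCTI (eI 0) (eI 2) x y z) (nodeRI tCTI (eI 2) (eI 0) x y z)
  end.

Definition PLI (r : nat) (x y z : nat) : F3I :=
  match r with
  | 0 => addI (addI (nodeI tPLI (eI 2) (eI 2) x y z) (nodeI tPLI (eI 2) (eI 2) y z x))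
              (nodeI tPLI (eI 2) (eI 2) z x y)
  | 1 => subI (addI (subI (subI (nodeI tPLI (eI 0) (eI 0) x y z) (nodeRI tPLI (eI 0) (eI 0) x y z))
                    (nodeI tPLI (eI 0) (eI 0) x z y)) (nodeRI tPLI (eI 0) (eI 0) x z y))
              (nodeRI tPLI (eI 0) (eI 2) x y z)
  | _ => subI (subI (nodeI tPLI (eI 0) (eI 2) x y z) (nodeI tPLI (eI 2) (eI 0) x z y))
              (nodeRI tPLI (eI 2) (eI 0) x y z)
  end.

Definition perms3 : seq (nat * nat * nat) :=
  [:: (0,1,2); (0,2,1); (1,0,2); (1,2,0); (2,0,1); (2,1,0)]%N.

Definition sumP (F : F3I) : int := sum3 (fun c => sum3 (fun i => sum3 (fun j => F c i j))).

Definition checkA : bool :=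
  all (fun r => all (fun t => all (fun r' => all (fun t' =>
     sumP (fun c i j => PLI r t.1.1 t.1.2 t.2 c i j * CTI r' t'.1.1 t'.1.2 t'.2 c i j) == 0)
   perms3) (iota 0 5)) perms3) (iota 0 3).

Definition tr (n : nat) := nth (0,0,0)%N perms3 n.
Definition CTg (h : nat) : F3I := CTI (h %/ 6) (tr (h %% 6)).1.1 (tr (h %% 6)).1.2 (tr (h %% 6)).2.
Definition PLsel : seq (nat * nat) := [:: (0, 0); (1, 0); (1, 2); (1, 4); (2, 0); (2, 1); (2, 3)]%N.
Definition PLg (m : nat) : F3I :=
  let p := nth (0,0)%N PLsel m in PLI p.1 (tr p.2).1.1 (tr p.2).1.2 (tr p.2).2.
Definition Clist : seq (seq int) :=
 [:: [:: Posz 0; Posz 0; Negz 0; Posz 0; Posz 0; Posz 0; Posz 0];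
  [:: Posz 0; Posz 0; Posz 0; Posz 1; Posz 0; Posz 0; Posz 0];
  [:: Posz 0; Posz 0; Posz 0; Posz 0; Posz 0; Posz 0; Posz 1];
  [:: Posz 0; Posz 1; Posz 0; Posz 0; Posz 0; Posz 0; Posz 0];
  [:: Posz 0; Posz 0; Posz 0; Posz 0; Posz 0; Posz 0; Posz 0];
  [:: Posz 0; Posz 0; Posz 0; Posz 0; Posz 0; Posz 0; Posz 0];
  [:: Posz 0; Posz 0; Posz 0; Posz 0; Posz 1; Posz 0; Posz 0];
  [:: Posz 0; Posz 0; Posz 0; Posz 0; Posz 0; Negz 0; Posz 0];
  [:: Posz 1; Posz 0; Posz 0; Posz 0; Posz 0; Posz 0; Posz 0];
  [:: Posz 0; Posz 0; Posz 0; Posz 0; Posz 0; Posz 0; Posz 0];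
  [:: Posz 0; Posz 0; Posz 0; Posz 0; Posz 0; Posz 0; Posz 0];
  [:: Posz 0; Posz 0; Posz 0; Posz 0; Posz 0; Posz 0; Posz 0];
  [:: Posz 0; Posz 0; Posz 0; Posz 0; Posz 0; Posz 0; Posz 0];
  [:: Posz 0; Posz 0; Posz 0; Posz 0; Posz 0; Posz 0; Posz 0];
  [:: Posz 0; Posz 0; Posz 0; Posz 0; Posz 0; Posz 0; Posz 0];
  [:: Posz 0; Posz 0; Posz 0; Posz 0; Posz 0; Posz 0; Posz 0];
  [:: Posz 0; Posz 0; Posz 0; Posz 0; Posz 0; Posz 0; Posz 0];
  [:: Posz 0; Posz 0; Posz 0; Posz 0; Posz 0; Posz 0; Posz 0];
  [:: Posz 0; Posz 0; Posz 0; Posz 0; Posz 0; Posz 0; Posz 0];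
  [:: Posz 0; Posz 0; Posz 0; Posz 0; Posz 0; Posz 0; Posz 0];
  [:: Posz 0; Posz 0; Posz 0; Posz 0; Posz 0; Posz 0; Posz 0];
  [:: Posz 0; Posz 0; Posz 0; Posz 0; Posz 0; Posz 0; Posz 0];
  [:: Posz 0; Posz 0; Posz 0; Posz 0; Posz 0; Posz 0; Posz 0];
  [:: Posz 0; Posz 0; Posz 0; Posz 0; Posz 0; Posz 0; Posz 0];
  [:: Posz 0; Posz 0; Posz 0; Posz 0; Posz 0; Posz 0; Posz 0];
  [:: Posz 0; Posz 0; Posz 0; Posz 0; Posz 0; Posz 0; Posz 0];
  [:: Posz 0; Posz 0; Posz 0; Posz 0; Posz 0; Posz 0; Posz 0]].

Definition Dlist : seq (seq int) :=
 [:: [:: Posz 0; Posz 0; Posz 0; Posz 0; Posz 0; Posz 0; Posz 0; Posz 0; Posz 0; Posz 0; Posz 0; Posz 0; Posz 0; Posz 0; Posz 0; Posz 0; Posz 0; Posz 0; Posz 1; Posz 0; Posz 0; Posz 0; Posz 0; Posz 0; Posz 0; Posz 0; Posz 0];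
  [:: Posz 0; Posz 0; Posz 0; Posz 0; Posz 0; Posz 0; Posz 0; Posz 0; Posz 0; Posz 0; Posz 1; Posz 0; Posz 0; Posz 0; Posz 0; Posz 0; Posz 0; Posz 0; Posz 0; Posz 0; Posz 0; Posz 0; Posz 0; Posz 0; Posz 0; Posz 0; Posz 0];
  [:: Posz 0; Posz 0; Posz 0; Posz 0; Posz 0; Posz 0; Posz 0; Posz 0; Posz 0; Posz 0; Posz 0; Posz 0; Posz 0; Posz 0; Posz 0; Posz 0; Posz 0; Posz 0; Posz 0; Posz 1; Posz 0; Posz 0; Posz 0; Posz 0; Posz 0; Posz 0; Posz 0];
  [:: Posz 0; Posz 0; Posz 0; Posz 0; Posz 0; Posz 0; Posz 0; Posz 0; Posz 0; Posz 0; Posz 0; Posz 0; Negz 0; Negz 0; Negz 0; Posz 0; Posz 0; Posz 0; Posz 0; Negz 0; Posz 0; Posz 0; Posz 0; Posz 0; Posz 0; Posz 0; Posz 0];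
  [:: Posz 0; Posz 0; Posz 0; Posz 0; Posz 0; Posz 0; Posz 0; Posz 0; Posz 0; Posz 1; Posz 0; Posz 0; Posz 0; Posz 0; Posz 0; Posz 0; Posz 0; Posz 0; Posz 0; Posz 0; Posz 0; Posz 0; Posz 0; Posz 0; Posz 0; Posz 0; Posz 0];
  [:: Posz 0; Posz 0; Posz 0; Posz 0; Posz 0; Posz 0; Posz 0; Posz 0; Posz 0; Negz 0; Posz 0; Posz 0; Posz 0; Posz 0; Posz 0; Posz 0; Posz 0; Posz 0; Posz 0; Posz 0; Posz 0; Negz 0; Negz 0; Negz 0; Posz 0; Posz 0; Posz 0];
  [:: Posz 0; Posz 0; Posz 0; Posz 0; Negz 0; Posz 0; Posz 0; Posz 0; Posz 0; Posz 0; Negz 0; Posz 0; Posz 0; Posz 0; Posz 0; Posz 0; Posz 0; Posz 0; Posz 0; Posz 0; Posz 0; Posz 0; Posz 0; Posz 0; Posz 0; Posz 0; Posz 0];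
  [:: Posz 0; Posz 0; Posz 0; Posz 0; Posz 0; Posz 0; Posz 0; Posz 0; Posz 0; Posz 0; Posz 0; Posz 0; Posz 0; Posz 0; Posz 0; Posz 0; Posz 0; Posz 0; Posz 0; Posz 0; Posz 0; Posz 0; Posz 0; Posz 0; Posz 0; Posz 0; Posz 0];
  [:: Posz 0; Posz 0; Posz 0; Posz 0; Posz 0; Posz 0; Posz 0; Posz 0; Posz 0; Posz 0; Posz 0; Posz 0; Posz 0; Posz 1; Posz 1; Posz 0; Posz 0; Posz 0; Posz 0; Posz 1; Posz 0; Posz 0; Posz 0; Posz 0; Posz 0; Posz 0; Posz 0];
  [:: Posz 0; Posz 0; Posz 0; Posz 0; Posz 0; Posz 0; Posz 0; Posz 0; Posz 0; Posz 0; Posz 0; Posz 0; Posz 0; Posz 0; Posz 0; Posz 0; Posz 0; Posz 0; Posz 0; Posz 0; Posz 0; Posz 0; Posz 0; Posz 0; Posz 0; Posz 0; Posz 0];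
  [:: Posz 0; Posz 0; Posz 0; Posz 0; Posz 0; Posz 0; Posz 0; Posz 0; Posz 0; Posz 1; Posz 0; Posz 0; Posz 0; Posz 0; Posz 0; Posz 0; Posz 0; Posz 0; Posz 0; Posz 0; Posz 0; Posz 1; Posz 0; Posz 1; Posz 0; Posz 0; Posz 0];
  [:: Posz 0; Posz 0; Posz 0; Posz 0; Posz 0; Posz 0; Posz 0; Posz 0; Posz 0; Posz 0; Posz 0; Posz 0; Posz 0; Posz 0; Posz 0; Posz 0; Posz 0; Posz 0; Posz 0; Posz 0; Posz 0; Posz 0; Posz 0; Posz 0; Posz 0; Posz 0; Posz 0];
  [:: Posz 0; Posz 0; Posz 0; Posz 0; Posz 0; Posz 0; Posz 0; Posz 0; Posz 0; Posz 0; Posz 0; Posz 0; Posz 0; Posz 0; Posz 0; Posz 0; Posz 0; Posz 0; Posz 0; Posz 0; Posz 0; Posz 0; Posz 0; Posz 0; Posz 0; Posz 0; Posz 1];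
  [:: Posz 0; Posz 0; Posz 0; Posz 0; Posz 0; Posz 0; Posz 0; Posz 0; Posz 0; Posz 0; Posz 0; Posz 0; Posz 0; Posz 0; Posz 0; Posz 0; Posz 0; Posz 1; Posz 0; Posz 0; Posz 0; Posz 0; Posz 0; Posz 0; Posz 0; Posz 0; Posz 0];
  [:: Posz 0; Posz 0; Posz 0; Posz 0; Posz 0; Posz 0; Posz 0; Posz 0; Posz 0; Posz 0; Posz 0; Posz 0; Posz 0; Posz 0; Posz 0; Posz 0; Posz 0; Posz 0; Posz 0; Posz 0; Posz 0; Posz 0; Posz 0; Posz 0; Posz 0; Posz 0; Posz 0];
  [:: Posz 0; Posz 0; Posz 0; Posz 0; Posz 0; Posz 0; Posz 0; Posz 0; Posz 0; Posz 0; Posz 0; Posz 0; Posz 0; Posz 0; Posz 0; Posz 0; Posz 0; Posz 0; Posz 0; Posz 0; Posz 0; Posz 0; Posz 0; Posz 0; Posz 0; Posz 0; Posz 0];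
  [:: Posz 0; Posz 0; Posz 0; Posz 0; Posz 0; Posz 0; Posz 0; Posz 0; Posz 0; Posz 0; Posz 0; Posz 0; Posz 0; Posz 0; Posz 0; Posz 0; Posz 0; Posz 0; Posz 0; Posz 0; Posz 0; Posz 0; Posz 0; Posz 0; Posz 0; Posz 0; Posz 0];
  [:: Posz 0; Posz 0; Posz 0; Posz 0; Posz 0; Posz 0; Posz 0; Posz 0; Posz 0; Posz 0; Posz 0; Posz 0; Posz 0; Posz 0; Posz 0; Posz 0; Posz 0; Posz 0; Posz 0; Posz 0; Posz 0; Posz 0; Posz 0; Posz 0; Posz 0; Posz 0; Posz 0];
  [:: Posz 0; Posz 0; Posz 0; Posz 0; Posz 0; Posz 1; Posz 0; Posz 0; Posz 0; Posz 0; Posz 0; Posz 0; Posz 0; Posz 0; Posz 0; Posz 0; Posz 0; Posz 0; Posz 0; Posz 0; Posz 0; Posz 0; Posz 0; Posz 0; Posz 0; Posz 0; Posz 0];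
  [:: Posz 0; Posz 0; Posz 0; Posz 0; Posz 0; Posz 0; Posz 0; Posz 0; Posz 0; Posz 0; Posz 0; Posz 0; Posz 0; Posz 0; Posz 0; Posz 0; Posz 0; Posz 0; Posz 0; Posz 0; Posz 0; Posz 0; Posz 0; Posz 0; Posz 0; Posz 0; Posz 0];
  [:: Posz 0; Posz 0; Posz 0; Posz 0; Posz 0; Posz 0; Posz 0; Posz 0; Posz 0; Posz 0; Posz 0; Posz 0; Posz 0; Posz 0; Posz 1; Posz 0; Posz 0; Posz 0; Posz 0; Posz 0; Posz 0; Posz 0; Posz 0; Posz 0; Posz 0; Posz 0; Posz 0];
  [:: Posz 0; Posz 0; Posz 0; Posz 0; Posz 0; Posz 0; Posz 0; Posz 0; Posz 0; Posz 0; Posz 0; Posz 0; Posz 0; Posz 0; Posz 0; Posz 0; Posz 0; Posz 0; Posz 0; Posz 0; Posz 0; Posz 0; Posz 0; Posz 0; Posz 0; Posz 0; Posz 0];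
  [:: Posz 0; Posz 0; Posz 0; Posz 0; Posz 0; Posz 0; Posz 0; Posz 0; Posz 0; Posz 0; Posz 0; Posz 0; Posz 0; Posz 0; Posz 0; Posz 0; Posz 0; Posz 0; Posz 0; Posz 0; Posz 0; Posz 0; Posz 0; Posz 1; Posz 0; Posz 0; Posz 0];
  [:: Posz 0; Posz 0; Posz 0; Posz 0; Posz 0; Posz 0; Posz 0; Posz 0; Posz 0; Posz 0; Posz 0; Posz 0; Posz 0; Posz 0; Posz 0; Posz 0; Posz 0; Posz 0; Posz 0; Posz 0; Posz 0; Posz 0; Posz 0; Posz 0; Posz 0; Posz 0; Posz 0];
  [:: Posz 0; Posz 0; Posz 0; Posz 0; Posz 0; Posz 0; Posz 0; Posz 0; Posz 0; Posz 0; Posz 0; Posz 0; Posz 0; Posz 0; Posz 0; Posz 0; Posz 1; Posz 0; Posz 0; Posz 0; Posz 1; Posz 0; Posz 0; Posz 0; Posz 0; Posz 0; Posz 0];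
  [:: Posz 0; Posz 0; Posz 0; Posz 0; Posz 0; Posz 0; Posz 0; Posz 0; Posz 0; Posz 0; Posz 0; Posz 1; Posz 0; Posz 0; Posz 0; Posz 0; Posz 0; Posz 0; Posz 0; Posz 0; Posz 0; Posz 0; Posz 0; Posz 0; Posz 1; Posz 0; Posz 0];
  [:: Posz 0; Posz 0; Posz 0; Posz 0; Posz 0; Posz 0; Posz 0; Posz 0; Posz 0; Posz 0; Posz 0; Posz 0; Posz 0; Posz 0; Posz 0; Posz 0; Negz 0; Posz 0; Posz 0; Posz 0; Posz 0; Posz 0; Posz 0; Posz 0; Posz 0; Posz 0; Posz 0];
  [:: Posz 0; Posz 0; Posz 0; Posz 0; Posz 0; Posz 0; Posz 0; Posz 0; Posz 0; Posz 0; Posz 0; Posz 0; Posz 0; Posz 0; Posz 0; Negz 0; Posz 0; Posz 0; Posz 0; Posz 0; Posz 0; Posz 0; Posz 0; Posz 0; Posz 0; Posz 0; Posz 0];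
  [:: Posz 0; Posz 0; Posz 0; Posz 0; Posz 0; Posz 0; Posz 0; Posz 0; Posz 0; Posz 0; Posz 0; Posz 0; Posz 0; Posz 0; Posz 0; Posz 0; Posz 0; Posz 0; Posz 0; Posz 0; Posz 0; Posz 0; Posz 0; Posz 0; Negz 0; Posz 0; Posz 0];
  [:: Posz 0; Posz 0; Posz 0; Posz 0; Posz 0; Posz 0; Posz 0; Posz 0; Posz 0; Posz 0; Posz 0; Posz 0; Posz 0; Posz 0; Posz 0; Posz 0; Posz 0; Posz 0; Posz 0; Posz 0; Posz 0; Posz 0; Posz 0; Posz 0; Posz 0; Negz 0; Posz 0]].
Definition CI (m c i j : nat) : int := nth 0 (nth [::] Clist (9 * c + 3 * i + j)) m.
Definition DI (h c i j : nat) : int := nth 0 (nth [::] Dlist h) (9 * c + 3 * i + j).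
Definition fsum (s : seq nat) (f : nat -> int) : int := foldr (fun x a => f x + a) 0 s.
Definition i3 := iota 0 3.
Definition checkB : bool :=
  all (fun c => all (fun i => all (fun j => all (fun c' => all (fun i' => all (fun j' =>
    (if (c' == c) && (i' == i) && (j' == j) then 1 else 0)
      - fsum (iota 0 7) (fun m => CI m c' i' j' * PLg m c i j)
    == fsum (iota 0 30) (fun h => CTg h c' i' j' * DI h c i j)) i3) i3) i3) i3) i3) i3.
Definition mxT (k : fieldType) (t : nat -> nat -> int) : 'M[k]_3 := \matrix_(i, j) (t i j)%:~R.
Definition rv (k : fieldType) (mu : nat -> int) : 'rV[k]_3 := \row_j (mu j)%:~R.
Definition mk (k : fieldType) (f : F3I) : F3 k 3 := [ffun c : 'I_3 => \matrix_(i, j) (f c i j)%:~R].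

Lemma sum3E (k : fieldType) (G : nat -> int) : \sum_(c < 3) ((G c)%:~R : k) = (sum3 G)%:~R.
Proof. by rewrite !big_ord_recr big_ord0 /= /sum3 !intrD add0r. Qed.

Lemma rv_mul (k : fieldType) mu t : rv k mu *m mxT k t = rv k (vmul mu t).
Proof.
apply/matrixP => i j; rewrite !mxE /vmul -sum3E.
by apply: eq_bigr => l _; rewrite !mxE intrM.
Qed.

Lemma nodeE (k : fieldType) t mu nu (a b c : 'I_3) :
  node (mxT k t) (rv k mu) (rv k nu) a b c = mk k (nodeI t mu nu a b c).
Proof.
apply/ffunP => c'; rewrite !ffunE /nodeI.
have -> : (c' == c) = (nat_of_ord c' == nat_of_ord c) by [].
case: ifP => _; last by apply/matrixP => i j; rewrite !mxE.
case: ifP => _; apply/matrixP => i j; rewrite !mxE big_ord1 !mxE.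
  by rewrite intrM.
rewrite intrM; congr (_ * _); rewrite /vmul -sum3E.
by apply: eq_bigr => l _; rewrite !mxE intrM.
Qed.

Lemma nodeRE (k : fieldType) t mu nu (a b c : 'I_3) :
  nodeR (mxT k t) (rv k mu) (rv k nu) a b c = mk k (nodeRI t mu nu a b c).
Proof. by rewrite /nodeR rv_mul nodeE. Qed.

Lemma mkB (k : fieldType) f g : mk k f - mk k g = mk k (subI f g).
Proof. by apply/ffunP => c; rewrite !ffunE; apply/matrixP => i j; rewrite !mxE intrB. Qed.
Lemma mkD (k : fieldType) f g : mk k f + mk k g = mk k (addI f g).
Proof. by apply/ffunP => c; rewrite !ffunE; apply/matrixP => i j; rewrite !mxE intrD. Qed.

Lemma tCTE (k : fieldType) : tCT k = mxT k tCTI.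
Proof. by apply/matrixP => i j; rewrite !mxE /tCTI; case: ifP. Qed.
Lemma tPLE (k : fieldType) : tPL k = mxT k tPLI.
Proof. by apply/matrixP => i j; rewrite /tPL /dual_twist tCTE !mxE /tPLI intrN. Qed.
Lemma e30 (k : fieldType) : e3 k ord0 = rv k (eI 0).
Proof.
apply/matrixP => i j; rewrite !mxE /eI.
have -> : (j == ord0 :> 'I_3) = (nat_of_ord j == 0%N) by [].
by case: ifP.
Qed.
Lemma e32 (k : fieldType) : e3 k (inord 2) = rv k (eI 2).
Proof.
apply/matrixP => i j; rewrite !mxE /eI.
have -> : (j == inord 2 :> 'I_3) = (nat_of_ord j == 2%N) by rewrite -val_eqE /= inordK.
by case: ifP.
Qed.

Definition d0 (k : fieldType) : 'I_3 -> 'I_3 -> 'I_3 -> F3 k 3 := fun _ _ _ => 0.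

Lemma CT_relE (k : fieldType) r (a b c : 'I_3) : (r < 5)%N ->
  nth (d0 k) (ComTrias_rels k) r a b c = mk k (CTI r a b c).
Proof.
case: r => [|[|[|[|[|r]]]]] // _;
by rewrite /= /star /bullet ?tCTE ?e30 ?e32 ?nodeE ?nodeRE ?mkB ?mkD.
Qed.

Lemma PL_relE (k : fieldType) r (a b c : 'I_3) : (r < 3)%N ->
  nth (d0 k) (PostLie_rels k) r a b c = mk k (PLI r a b c).
Proof.
case: r => [|[|[|r]]] // _;
by rewrite /= /circ /brk ?tPLE ?e30 ?e32 ?nodeE ?nodeRE ?mkB ?mkD ?mkB ?mkD ?mkB.
Qed.

Lemma checkA_ok : checkA. Proof. vm_compute. reflexivity. Qed.
Lemma checkB_ok : checkB. Proof. vm_compute. reflexivity. Qed.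

Lemma mem_ap (k : fieldType) (rels : seq ('I_3 -> 'I_3 -> 'I_3 -> F3 k 3)) r (s : 'S_3) :
  (r < size rels)%N ->
  nth (d0 k) rels r (s ord0) (s (inord 1)) (s (inord 2)) \in
  [seq r0 (s0 ord0) (s0 (inord 1)) (s0 (inord 2)) | r0 : 'I_3 -> 'I_3 -> 'I_3 -> F3 k 3 <- rels, s0 : 'S_3 <- enum [set: 'S_3]].
Proof.
elim: rels r => [|x rels IH] [|r] //= Hr; rewrite mem_cat; apply/orP.
  by left; apply: (map_f (fun s : 'S_3 => x (s ord0) (s (inord 1)) (s (inord 2)))); rewrite mem_enum inE.
by right; exact: IH.
Qed.

Lemma mem_ap_inv (k : fieldType) (rels : seq ('I_3 -> 'I_3 -> 'I_3 -> F3 k 3)) x :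
  x \in [seq r0 (s0 ord0) (s0 (inord 1)) (s0 (inord 2)) | r0 : 'I_3 -> 'I_3 -> 'I_3 -> F3 k 3 <- rels, s0 : 'S_3 <- enum [set: 'S_3]] ->
  exists r, exists s : 'S_3, (r < size rels)%N /\
     x = nth (d0 k) rels r (s ord0) (s (inord 1)) (s (inord 2)).
Proof.
elim: rels => [|y rels IH] //=; rewrite mem_cat => /orP [/mapP [s _ ->] | /IH [r [s [Hr ->]]]].
  by exists 0%N, s.
by exists r.+1, s.
Qed.

Lemma perm_trip (s : 'S_3) :
  (nat_of_ord (s ord0), nat_of_ord (s (inord 1)), nat_of_ord (s (inord 2))) \in perms3.
Proof.
have n01 : s ord0 != s (inord 1) by rewrite (inj_eq perm_inj) -val_eqE /= inordK.
have n02 : s ord0 != s (inord 2) by rewrite (inj_eq perm_inj) -val_eqE /= inordK.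
have n12 : s (inord 1) != s (inord 2) by rewrite (inj_eq perm_inj) -val_eqE /= !inordK.
move: n01 n02 n12; rewrite -!val_eqE /=.
case: (s ord0) => a Ha; case: (s (inord 1)) => b Hb; case: (s (inord 2)) => c Hc /=.
by move: a b c Ha Hb Hc => [|[|[|a]]] [|[|[|b]]] [|[|[|c]]].
Qed.

Lemma trip_perm (x y z : nat) : (x, y, z) \in perms3 ->
  exists s : 'S_3, [/\ nat_of_ord (s ord0) = x, nat_of_ord (s (inord 1)) = y
                    & nat_of_ord (s (inord 2)) = z].
Proof.
move=> H.
have : all (fun t : nat * nat * nat => all (fun n => n < 3)%N [:: t.1.1; t.1.2; t.2]
                     && uniq [:: t.1.1; t.1.2; t.2]) perms3 by [].
move/allP/(_ _ H) => /andP [/allP Hb Hu].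
have Hn (i : 'I_3) : (nth 0%N [:: x; y; z] i < 3)%N.
  by apply: Hb; apply: mem_nth; rewrite /= ltn_ord.
pose f (i : 'I_3) : 'I_3 := inord (nth 0%N [:: x; y; z] i).
have finj : injective f.
  move=> i j /(congr1 val); rewrite /f /= !inordK // => /eqP.
  by rewrite nth_uniq //= => /eqP /val_inj.
exists (perm finj); rewrite !permE /f /=.
have e1 : nat_of_ord (inord 1 : 'I_3) = 1%N by rewrite inordK.
have e2 : nat_of_ord (inord 2 : 'I_3) = 2%N by rewrite inordK.
split; rewrite inordK ?e1 ?e2 //.
- by have := Hn ord0.
- by have := Hn (inord 1); rewrite e1.
- by have := Hn (inord 2); rewrite e2.
Qed.

Definition S3 (k : fieldType) (F : 'I_3 -> 'I_3 -> 'I_3 -> k) : k :=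
  \sum_(c < 3) \sum_(i < 3) \sum_(j < 3) F c i j.

Lemma pairingE (k : fieldType) (Phi Psi : F3 k 3) :
  pairing Phi Psi = S3 (fun c i j => Phi c i j * Psi c i j).
Proof. by []. Qed.

Lemma S3_ext (k : fieldType) (F G : 'I_3 -> 'I_3 -> 'I_3 -> k) :
  (forall c i j, F c i j = G c i j) -> S3 F = S3 G.
Proof.
by move=> H; apply: eq_bigr => c _; apply: eq_bigr => i _; apply: eq_bigr => j _.
Qed.

Lemma S3_sum (k : fieldType) (I : Type) (r : seq I) (F : I -> 'I_3 -> 'I_3 -> 'I_3 -> k) :
  \sum_(m <- r) S3 (F m) = S3 (fun c i j => \sum_(m <- r) F m c i j).
Proof.
rewrite /S3 exchange_big; apply: eq_bigr => c _ /=; rewrite exchange_big.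
by apply: eq_bigr => i _; rewrite exchange_big.
Qed.

Lemma S3_mulr (k : fieldType) (F : 'I_3 -> 'I_3 -> 'I_3 -> k) a :
  S3 F * a = S3 (fun c i j => F c i j * a).
Proof.
rewrite /S3 mulr_suml; apply: eq_bigr => c _; rewrite mulr_suml.
by apply: eq_bigr => i _; rewrite mulr_suml.
Qed.

Lemma S3_mull (k : fieldType) (F : 'I_3 -> 'I_3 -> 'I_3 -> k) a :
  a * S3 F = S3 (fun c i j => a * F c i j).
Proof.
rewrite /S3 mulr_sumr; apply: eq_bigr => c _; rewrite mulr_sumr.
by apply: eq_bigr => i _; rewrite mulr_sumr.
Qed.

Lemma S3_B (k : fieldType) (F G : 'I_3 -> 'I_3 -> 'I_3 -> k) :
  S3 F - S3 G = S3 (fun c i j => F c i j - G c i j).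
Proof.
rewrite /S3 -sumrB; apply: eq_bigr => c _; rewrite -sumrB.
by apply: eq_bigr => i _; rewrite -sumrB.
Qed.

Lemma S3_delta (k : fieldType) (Phi : 'I_3 -> 'I_3 -> 'I_3 -> k) (c i j : 'I_3) :
  S3 (fun c' i' j' => Phi c' i' j' *
        (if (nat_of_ord c' == c) && (nat_of_ord i' == i) && (nat_of_ord j' == j)
         then 1 else 0 : int)%:~R) = Phi c i j.
Proof.
rewrite /S3 (bigD1 c) //= [X in _ + X]big1 => [|c' Hc]; last first.
  change (c' != c) with (nat_of_ord c' != nat_of_ord c) in Hc.
  by apply: big1 => i' _; apply: big1 => j' _; rewrite (negbTE Hc) /= mulr0z mulr0.
rewrite eqxx /= addr0 (bigD1 i) //= [X in _ + X]big1 => [|i' Hi]; last first.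
  change (i' != i) with (nat_of_ord i' != nat_of_ord i) in Hi.
  by apply: big1 => j' _; rewrite (negbTE Hi) /= mulr0z mulr0.
rewrite eqxx /= addr0 (bigD1 j) //= [X in _ + X]big1 => [|j' Hj]; last first.
  change (j' != j) with (nat_of_ord j' != nat_of_ord j) in Hj.
  by rewrite (negbTE Hj) /= mulr0z mulr0.
by rewrite eqxx /= addr0 mulr1z mulr1.
Qed.

Lemma S3_int (k : fieldType) (F : F3I) :
  S3 (fun c i j => ((F c i j)%:~R : k)) = (sumP F)%:~R.
Proof.
rewrite /sumP -sum3E /S3; apply: eq_bigr => c _; rewrite -sum3E.
by apply: eq_bigr => i _; rewrite -sum3E.
Qed.

Lemma pairing_mk (k : fieldType) f g :
  pairing (mk k f) (mk k g) = (sumP (fun c i j => f c i j * g c i j))%:~R.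
Proof.
rewrite pairingE -S3_int; apply: S3_ext => c i j.
by rewrite !ffunE !mxE intrM.
Qed.

Lemma pairing_mkr (k : fieldType) (Phi : F3 k 3) g :
  pairing Phi (mk k g) = S3 (fun c i j => Phi c i j * (g c i j)%:~R).
Proof. by rewrite pairingE; apply: S3_ext => c i j; rewrite !ffunE !mxE. Qed.

Lemma pairingC (k : fieldType) (Phi Psi : F3 k 3) : pairing Phi Psi = pairing Psi Phi.
Proof. by rewrite !pairingE; apply: S3_ext => c i j; rewrite mulrC. Qed.

Lemma pairing_lin (k : fieldType) (Phi : F3 k 3) (I : Type) (r : seq I) (a : I -> k)
   (F : I -> F3 k 3) :
  pairing Phi (\sum_(m <- r) a m *: F m) = \sum_(m <- r) a m * pairing Phi (F m).
Proof.
rewrite pairingE.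
transitivity (S3 (fun c i j => \sum_(m <- r) a m * (Phi c i j * F m c i j))).
  apply: S3_ext => c i j; rewrite sum_ffunE summxE mulr_sumr.
  by apply: eq_bigr => m _; rewrite !ffunE !mxE mulrCA.
rewrite -S3_sum; apply: eq_bigr => m _.
by rewrite pairingE S3_mull.
Qed.

Lemma pairing_span (k : fieldType) (X : seq (F3 k 3)) Phi Psi :
  Psi \in <<X>>%VS -> (forall x, x \in X -> pairing Phi x = 0) -> pairing Phi Psi = 0.
Proof.
move=> HP H; rewrite (coord_span (X := in_tuple X) HP) pairing_lin.
apply: big1 => i _; rewrite H ?mulr0 //.
by apply: mem_nth; exact: ltn_ord.
Qed.

Lemma fsumE (k : fieldType) (s : seq nat) (f : nat -> int) :
  ((fsum s f)%:~R : k) = \sum_(m <- s) (f m)%:~R.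
Proof. by elim: s => [|x s IH]; rewrite ?big_nil ?big_cons //= intrD IH. Qed.

Lemma in3 (c : 'I_3) : nat_of_ord c \in i3.
Proof. by rewrite mem_iota ltn_ord. Qed.

Lemma checkB_at (c i j c' i' j' : 'I_3) :
  fsum (iota 0 7) (fun m => CI m c' i' j' * PLg m c i j) =
  (if (nat_of_ord c' == c) && (nat_of_ord i' == i) && (nat_of_ord j' == j) then 1 else 0)
  - fsum (iota 0 30) (fun h => CTg h c' i' j' * DI h c i j).
Proof.
move/allP: checkB_ok => /(_ _ (in3 c)) /allP /(_ _ (in3 i)) /allP /(_ _ (in3 j))
  /allP /(_ _ (in3 c')) /allP /(_ _ (in3 i')) /allP /(_ _ (in3 j')) /eqP <-.
by rewrite opprB addrC subrK.
Qed.

Lemma B_dir (k : fieldType) (Phi : F3 k 3) :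
  (forall h, (h < 30)%N -> S3 (fun c i j => Phi c i j * (CTg h c i j)%:~R) = 0) ->
  Phi = \sum_(m <- iota 0 7) S3 (fun c i j => Phi c i j * (CI m c i j)%:~R) *: mk k (PLg m).
Proof.
move=> HPhi; apply/ffunP => c; apply/matrixP => i j; rewrite sum_ffunE summxE.
under eq_bigr => m _ do rewrite !ffunE !mxE.
rewrite (eq_bigr (fun m => S3 (fun c' i' j' => Phi c' i' j' * (CI m c' i' j' * PLg m c i j)%:~R)));
  last by move=> m _; rewrite S3_mulr; apply: S3_ext => *; rewrite intrM mulrA.
rewrite S3_sum.
rewrite (S3_ext (G := fun c' i' j' => Phi c' i' j' *
        (if (nat_of_ord c' == c) && (nat_of_ord i' == i) && (nat_of_ord j' == j) then 1 else 0 : int)%:~R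
        - Phi c' i' j' * (fsum (iota 0 30) (fun h => CTg h c' i' j' * DI h c i j))%:~R)); last first.
  by move=> c' i' j'; rewrite -mulr_sumr -mulrBr -intrB -checkB_at fsumE.
rewrite -S3_B S3_delta.
rewrite (S3_ext (G := fun c' i' j' => \sum_(h <- iota 0 30)
            Phi c' i' j' * (CTg h c' i' j')%:~R * (DI h c i j)%:~R)); last first.
  by move=> c' i' j'; rewrite fsumE mulr_sumr; apply: eq_bigr => h _; rewrite intrM mulrA.
rewrite -S3_sum big_seq big1 ?subr0 // => h; rewrite mem_iota => /andP [_ Hh].
by rewrite -S3_mulr HPhi // mul0r.
Qed.

Lemma CTg_mem (k : fieldType) h : (h < 30)%N -> mk k (CTg h) \in ComTrias_R k.
Proof.
move=> Hh.
have Ht : tr (h %% 6) \in perms3 by apply: mem_nth; rewrite ltn_pmod.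
have Hr : (h %/ 6 < 5)%N by rewrite ltn_divLR.
rewrite /CTg; case E: (tr (h %% 6)) Ht => [[x y] z] Ht /=.
have [s [e0 e1 e2]] := trip_perm Ht.
rewrite -e0 -e1 -e2 -(CT_relE k _ _ _ Hr) /ComTrias_R /rel_space.
by apply: memv_span; apply: mem_ap.
Qed.

Lemma PLg_mem (k : fieldType) m : m \in iota 0 7 -> mk k (PLg m) \in PostLie_R k.
Proof.
move=> Hm.
have := allP (isT : all (fun m => ((nth (0,0)%N PLsel m).1 < 3)%N
                               && ((nth (0,0)%N PLsel m).2 < 6)%N) (iota 0 7)) m Hm.
rewrite /PLg; case: (nth (0,0)%N PLsel m) => [r pi] /andP [/= Hr Hpi].
have Ht : tr pi \in perms3 by apply: mem_nth.
case E: (tr pi) Ht => [[x y] z] Ht /=.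
have [s [e0 e1 e2]] := trip_perm Ht.
rewrite -e0 -e1 -e2 -(PL_relE k _ _ _ Hr) /PostLie_R /rel_space.
by apply: memv_span; apply: mem_ap.
Qed.

Theorem mainTheorem14 (k : fieldType) (hk : [pchar k] =i pred0) :
  forall Phi : F3 k 3, in_orth (ComTrias_R k) Phi <-> Phi \in PostLie_R k.
Proof.
move=> Phi; split.
  move=> Horth.
  have H : forall h, (h < 30)%N -> S3 (fun c i j => Phi c i j * (CTg h c i j)%:~R) = 0.
    by move=> h Hh; rewrite -pairing_mkr; apply: Horth; exact: CTg_mem.
  rewrite (B_dir H) big_seq; apply: memv_suml => m Hm.
  by apply: memvZ; exact: PLg_mem.
move=> HPhi Psi HPsi.
rewrite /PostLie_R /rel_space in HPhi; rewrite /ComTrias_R /rel_space in HPsi.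
rewrite pairingC; apply: (pairing_span HPhi) => y Hy.
rewrite pairingC; apply: (pairing_span HPsi) => x Hx.
have [r [s [Hr ->]]] := mem_ap_inv Hy.
have [r' [s' [Hr' ->]]] := mem_ap_inv Hx.
rewrite PL_relE // CT_relE // pairing_mk.
have Hr3 : r \in iota 0 3 by rewrite mem_iota.
have Hr5 : r' \in iota 0 5 by rewrite mem_iota.
move/allP: checkA_ok => /(_ _ Hr3) /allP /(_ _ (perm_trip s)) /allP /(_ _ Hr5)
  /allP /(_ _ (perm_trip s')) /eqP /= ->.
by rewrite mulr0z.
Qed.
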